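(* For every well-filtered, coherent topological space $X$, the poset $\mathcal QX$ is a meet-continuous dcpo inf-semilattice which is well-filtered and coherent in its Scott topology. Hence $\mathcal Q\mathbb R_\ell$, $\mathcal Q^2\mathbb R_\ell$, $\ldots$ are all meet-continuous dcpo inf-semilattices which are well-filtered and coherent in their Scott topologies.
   Context: $\mathcal QX$ is the set of non-empty compact saturated subsets of $X$ ordered by reverse inclusion $\supseteq$; $\mathcal Q^{n+1}\mathbb R_\ell=\mathcal Q(\mathcal Q^n\mathbb R_\ell)$ where $\mathcal Q^n\mathbb R_\ell$ carries its Scott topology. The Sorgenfrey line $\mathbb R_\ell$ is $\mathbb R$ with the topology generated by $[a,b[$, $a<b$. A space is well-filtered if whenever a filtered family of compact saturated sets has intersection contained in an open $U$, some member of the family is contained in $U$. A space is coherent if the intersection of any two compact saturated subsets is compact. A dcpo inf-semilattice $P$ is meet-continuous if $x\wedge\sup D=\sup_{d\in D}(x\wedge d)$ for every $x\in P$ and directed $D\subseteq P$. *)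

(* Defs.v *)
From Stdlib Require Import Reals.


Record tspace := TSpace { pt :> Type; is_open : (pt -> Prop) -> Prop }.

Definition subset {T : Type} (A B : T -> Prop) : Prop := forall x, A x -> B x.

Definition topological (X : tspace) : Prop :=
  is_open X (fun _ => True) /\
  (forall U V, is_open X U -> is_open X V -> is_open X (fun x => U x /\ V x)) /\
  (forall F : (X -> Prop) -> Prop, (forall U, F U -> is_open X U) ->
      is_open X (fun x => exists U, F U /\ U x)).

Definition compact (X : tspace) (K : X -> Prop) : Prop :=
  forall F : (X -> Prop) -> Prop, (forall U, F U -> is_open X U) ->
    subset K (fun x => exists U, F U /\ U x) ->
    exists (n : nat) (G : nat -> X -> Prop),
      (forall i, (i < n)%nat -> F (G i)) /\
      subset K (fun x => exists i, (i < n)%nat /\ G i x).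

Definition saturated (X : tspace) (K : X -> Prop) : Prop :=
  forall x, (forall U, is_open X U -> subset K U -> U x) -> K x.

Definition compact_saturated (X : tspace) (K : X -> Prop) : Prop :=
  compact X K /\ saturated X K.

Definition filtered_family (X : tspace) (F : (X -> Prop) -> Prop) : Prop :=
  (exists K, F K) /\
  forall K1 K2, F K1 -> F K2 ->
    exists K3, F K3 /\ subset K3 K1 /\ subset K3 K2.

Definition well_filtered (X : tspace) : Prop :=
  forall (F : (X -> Prop) -> Prop) (U : X -> Prop),
    (forall K, F K -> compact_saturated X K) -> filtered_family X F ->
    is_open X U -> subset (fun x => forall K, F K -> K x) U ->
    exists K, F K /\ subset K U.

Definition coherent (X : tspace) : Prop :=
  forall K1 K2 : X -> Prop, compact_saturated X K1 -> compact_saturated X K2 ->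
    compact X (fun x => K1 x /\ K2 x).

Definition upper_bound {P : Type} (le : P -> P -> Prop) (D : P -> Prop) (u : P) :=
  forall d, D d -> le d u.
Definition lower_bound {P : Type} (le : P -> P -> Prop) (D : P -> Prop) (u : P) :=
  forall d, D d -> le u d.
Definition is_sup {P : Type} (le : P -> P -> Prop) (D : P -> Prop) (s : P) :=
  upper_bound le D s /\ forall u, upper_bound le D u -> le s u.
Definition is_inf {P : Type} (le : P -> P -> Prop) (D : P -> Prop) (m : P) :=
  lower_bound le D m /\ forall u, lower_bound le D u -> le u m.
Definition pair_set {P : Type} (x y : P) : P -> Prop := fun z => z = x \/ z = y.

Definition directed {P : Type} (le : P -> P -> Prop) (D : P -> Prop) : Prop :=
  (exists d, D d) /\
  forall a b, D a -> D b -> exists c, D c /\ le a c /\ le b c.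

Definition is_dcpo {P : Type} (le : P -> P -> Prop) : Prop :=
  forall D, directed le D -> exists s, is_sup le D s.

Definition inf_semilattice {P : Type} (le : P -> P -> Prop) : Prop :=
  forall x y, exists m, is_inf le (pair_set x y) m.

Definition meet_continuous {P : Type} (le : P -> P -> Prop) : Prop :=
  forall x (D : P -> Prop) s m,
    directed le D -> is_sup le D s -> is_inf le (pair_set x s) m ->
    is_sup le (fun y => exists d, D d /\ is_inf le (pair_set x d) y) m.

Definition scott_open {P : Type} (le : P -> P -> Prop) (U : P -> Prop) : Prop :=
  (forall x y, U x -> le x y -> U y) /\
  forall D s, directed le D -> is_sup le D s -> U s -> exists d, D d /\ U d.

(* QX: nonempty compact saturated subsets, ordered by reverse inclusion. *)
Record Qpt (X : tspace) := MkQ {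
  Qset : pt X -> Prop;
  Qne : exists x : pt X, Qset x;
  Qcs : compact_saturated X Qset }.

Definition Qle (X : tspace) (A B : Qpt X) : Prop := subset (Qset _ B) (Qset _ A).

Definition QS (X : tspace) : tspace := TSpace (Qpt X) (scott_open (@Qle X)).

Definition sorgenfrey : tspace :=
  TSpace R (fun U => forall x, U x -> exists a b, (a < b)%R /\ (a <= x < b)%R /\
                                   subset (fun y => (a <= y < b)%R) U).

(* QnR n = Q^n R_l with its Scott topology (n >= 1); QnR 0 = R_l. *)
Fixpoint QnR (n : nat) : tspace :=
  match n with O => sorgenfrey | S m => QS (QnR m) end.

Definition Q_good (X : tspace) : Prop :=
  is_dcpo (@Qle X) /\ inf_semilattice (@Qle X) /\ meet_continuous (@Qle X) /\
  well_filtered (QS X) /\ coherent (QS X).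

(* Main.v *)
From Stdlib Require Import Reals Lra Lia Classical ClassicalEpsilon FunctionalExtensionality PropExtensionality.
From mathcomp Require classical_sets.
Require Import Defs.

Lemma pred_ext {T : Type} (A B : T -> Prop) : (forall x, A x <-> B x) -> A = B.
Proof. intro H; apply functional_extensionality; intro x; apply propositional_extensionality; apply H. Qed.

Lemma open_ext (X : tspace) (U V : X -> Prop) :
  is_open X U -> (forall x, U x <-> V x) -> is_open X V.
Proof. intros HU H; rewrite <- (pred_ext _ _ H); exact HU. Qed.

Lemma open_union (X : tspace) (F : (X -> Prop) -> Prop) : topological X ->
  (forall U, F U -> is_open X U) -> is_open X (fun x => exists U, F U /\ U x).
Proof. intros [_ [_ H]] HF; apply H; exact HF. Qed.

Lemma open_empty (X : tspace) : topological X -> is_open X (fun _ => False).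
Proof.
  intro T. apply (open_ext X (fun x => exists U : X -> Prop, False /\ U x)).
  - apply open_union; [exact T| tauto].
  - intro x; split; [intros [U [[] _]] | intros []].
Qed.

Lemma open_finunion (X : tspace) (n : nat) (G : nat -> X -> Prop) : topological X ->
  (forall i, (i < n)%nat -> is_open X (G i)) -> is_open X (fun x => exists i, (i < n)%nat /\ G i x).
Proof.
  intros T HG. apply (open_ext X (fun x => exists U, (exists i, (i < n)%nat /\ U = G i) /\ U x)).
  - apply open_union; auto. intros U [i [Hi ->]]; auto.
  - intro x; split.
    + intros [U [[i [Hi ->]] HU]]; eauto.
    + intros [i [Hi H]]; exists (G i); eauto.
Qed.

Lemma concat_fam {Y : Type} (n1 n2 : nat) (G1 G2 : nat -> Y) :
  exists G : nat -> Y,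
    (forall j, (j < n1 + n2)%nat -> (exists i, (i < n1)%nat /\ G j = G1 i) \/ (exists i, (i < n2)%nat /\ G j = G2 i)) /\
    (forall i, (i < n1)%nat -> exists j, (j < n1 + n2)%nat /\ G j = G1 i) /\
    (forall i, (i < n2)%nat -> exists j, (j < n1 + n2)%nat /\ G j = G2 i).
Proof.
  exists (fun j => if Nat.ltb j n1 then G1 j else G2 (j - n1)%nat). split; [|split].
  - intros j Hj. destruct (Nat.ltb j n1) eqn:E.
    + left; exists j; split; auto. apply Nat.ltb_lt; auto.
    + right; exists (j - n1)%nat; split; auto. apply Nat.ltb_ge in E; lia.
  - intros i Hi; exists i; split; [lia|]. replace (Nat.ltb i n1) with true; auto.
    symmetry; apply Nat.ltb_lt; auto.
  - intros i Hi; exists (n1 + i)%nat; split; [lia|]. replace (Nat.ltb (n1 + i) n1) with false.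
    + f_equal; lia.
    + symmetry; apply Nat.ltb_ge; lia.
Qed.

Lemma compact_updir (X : tspace) (K : X -> Prop) (F : (X -> Prop) -> Prop) :
  compact X K -> (forall U, F U -> is_open X U) ->
  subset K (fun x => exists U, F U /\ U x) ->
  (exists U0, F U0) ->
  (forall U1 U2, F U1 -> F U2 -> exists U3, F U3 /\ subset U1 U3 /\ subset U2 U3) ->
  exists U, F U /\ subset K U.
Proof.
  intros HK HF Hc [U0 H0] Hd.
  destruct (HK F HF Hc) as [n [G [HG HKG]]].
  assert (Hm : forall m, (m <= n)%nat -> exists U, F U /\ forall i, (i < m)%nat -> subset (G i) U).
  { induction m as [|m IH]; intros Hm.
    - exists U0; split; auto; intros; lia.
    - destruct IH as [U [HU HUi]]; [lia|].
      destruct (Hd U (G m) HU (HG m ltac:(lia))) as [U3 [H3 [S1 S2]]].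
      exists U3; split; auto. intros i Hi x Hx.
      destruct (Nat.eq_dec i m) as [->|Hne]; auto.
      apply S1, (HUi i); auto; lia. }
  destruct (Hm n (le_n _)) as [U [HU HUi]].
  exists U; split; auto. intros x Hx. destruct (HKG x Hx) as [i [Hi Gi]]. eapply HUi; eauto.
Qed.

Lemma compact_ext (X : tspace) (A B : X -> Prop) :
  (forall x, A x <-> B x) -> compact X A -> compact X B.
Proof.
  intros H HA F HF Hc. destruct (HA F HF) as [n [G [HG HAG]]].
  - intros x Hx; apply Hc, H, Hx.
  - exists n, G; split; auto. intros x Hx; apply HAG, H, Hx.
Qed.

Lemma compact_inter_closed (X : tspace) (K O : X -> Prop) :
  compact X K -> is_open X O -> compact X (fun x => K x /\ ~ O x).
Proof.
  intros HK HO F HF Hc.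
  destruct (classic (exists U0, F U0)) as [[U0 H0]|HnF].
  2:{ exists 0%nat, (fun _ _ => False); split; [intros; lia|].
      intros x Hx. destruct (Hc x Hx) as [U [HU _]]. exfalso; eauto. }
  destruct (HK (fun U => F U \/ U = O)) as [n [G [HG HKG]]].
  - intros U [HU| ->]; auto.
  - intros x Hx. destruct (classic (O x)) as [Ho|Ho].
    + exists O; auto.
    + destruct (Hc x (conj Hx Ho)) as [U [HU HUx]]; exists U; auto.
  - exists n, (fun i => if excluded_middle_informative (F (G i)) then G i else U0).
    split.
    + intros i Hi; destruct (excluded_middle_informative (F (G i))); auto.
    + intros x [Hx Ho]. destruct (HKG x Hx) as [i [Hi Gx]]. exists i; split; auto.
      destruct (excluded_middle_informative (F (G i))); auto.
      destruct (HG i Hi) as [E|E]; [contradiction|]. subst; contradiction.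
Qed.

Lemma zorn_max (T : Type) (P : (T -> Prop) -> Prop) :
  (forall F : (T -> Prop) -> Prop, (forall A, F A -> P A) ->
     (forall A B, F A -> F B -> subset A B \/ subset B A) ->
     P (fun x => exists A, F A /\ A x)) ->
  exists A, P A /\ forall B, subset A B -> ~ subset B A -> ~ P B.
Proof.
  intros H. destruct (@classical_sets.Zorn_bigcup T P) as [A [PA HA]].
  - intros F HF Ht. 
    replace (classical_sets.bigcup F (fun X => X)) with (fun x => exists A, F A /\ A x).
    + apply H; auto.
    + apply pred_ext; intro x; split.
      * intros [A [FA Ax]]; exists A; auto.
      * intros [A FA Ax]; exists A; auto.
  - exists A; split; auto. intros B S1 S2 PB. apply (HA B); auto. split; auto.
Qed.

Lemma closedK_wf (Y : tspace) :
  (forall K, compact Y K -> is_open Y (fun x => ~ K x)) -> well_filtered Y.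
Proof.
  intros HC F U HF [[K0 HK0] Hfil] HU Hsub.
  destruct (proj1 (HF K0 HK0) (fun O => O = U \/ exists K, F K /\ O = (fun x => ~ K x)))
    as [n [G [HG HKG]]].
  - intros O [->|[K [HK ->]]]; auto. apply HC, HF, HK.
  - intros x Hx. destruct (classic (U x)) as [Hu|Hu].
    + exists U; auto.
    + destruct (classic (forall K, F K -> K x)) as [Hall|Hn].
      * exfalso; apply Hu, Hsub, Hall.
      * apply not_all_ex_not in Hn. destruct Hn as [K HK].
        apply imply_to_and in HK. destruct HK as [HK1 HK2].
        exists (fun x => ~ K x); split; [right; exists K; split; auto|]. exact HK2.
  - assert (Hm : forall m, (m <= n)%nat -> exists K', F K' /\ subset K' K0 /\
       forall i, (i < m)%nat -> forall x, K' x -> G i x -> U x).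
    { induction m as [|m IH]; intros Hm.
      - exists K0; split; auto; split; [intros x h; exact h|intros; lia].
      - destruct IH as [K' [HK' [S0 Hi]]]; [lia|].
        destruct (HG m ltac:(lia)) as [E|[K [HK E]]].
        + exists K'; split; auto; split; auto. intros i Hi' x Kx Gx.
          destruct (Nat.eq_dec i m) as [->|ne]; [rewrite E in Gx; auto|].
          apply (Hi i ltac:(lia)); auto.
        + destruct (Hfil K' K HK' HK) as [K3 [H3 [S1 S2]]].
          exists K3; split; auto; split; [intros x h; auto|].
          intros i Hi' x Kx Gx.
          destruct (Nat.eq_dec i m) as [->|ne].
          * rewrite E in Gx. exfalso; apply Gx, S2, Kx.
          * apply (Hi i ltac:(lia)); auto. }
    destruct (Hm n (le_n _)) as [K' [HK' [S0 Hi]]].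
    exists K'; split; auto. intros x Kx. destruct (HKG x (S0 x Kx)) as [i [Hi' Gx]].
    eapply Hi; eauto.
Qed.

Lemma closedK_coh (Y : tspace) :
  (forall K, compact Y K -> is_open Y (fun x => ~ K x)) -> coherent Y.
Proof.
  intros HC K1 K2 [H1 _] [H2 _].
  apply (compact_ext Y (fun x => K1 x /\ ~ (fun y => ~ K2 y) x)).
  - intro x; simpl; split; intros [a b]; split; auto. apply NNPP; auto.
  - apply compact_inter_closed; auto.
Qed.

Lemma sorg_top : topological sorgenfrey.
Proof.
  split; [|split].
  - intros x _. exists x, (x + 1)%R. split; [lra|split; [lra|]]. intros y _; exact I.
  - intros U V HU HV x [Ux Vx].
    destruct (HU x Ux) as [a [b [Hab [Hx S]]]].
    destruct (HV x Vx) as [c [d [Hcd [Hx' S']]]].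
    exists (Rmax a c), (Rmin b d).
    assert (a <= Rmax a c /\ c <= Rmax a c /\ Rmin b d <= b /\ Rmin b d <= d)%R
      by (repeat split; [apply Rmax_l|apply Rmax_r|apply Rmin_l|apply Rmin_r]).
    assert (Rmax a c <= x /\ x < Rmin b d)%R.
    { split; [apply Rmax_lub|apply Rmin_glb_lt]; lra. }
    split; [lra|split; [lra|]].
    intros y Hy; split; [apply S|apply S']; lra.
  - intros F HF x [U [FU Ux]].
    destruct (HF U FU x Ux) as [a [b [Hab [Hx S]]]].
    exists a, b; split; auto; split; auto. intros y Hy; exists U; split; auto.
Qed.

Lemma sorg_closedK : forall K, compact sorgenfrey K -> is_open sorgenfrey (fun x => ~ K x).
Proof.
  intros K HK x Kx.
  destruct (compact_updir sorgenfrey K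
     (fun U => exists n : nat, U = (fun y : R => y < x \/ x + / (INR n + 1) <= y)%R) HK)
    as [U [[n ->] HS]].
  - intros U [n ->] y Hy.
    destruct Hy as [Hy|Hy].
    + exists y, x; split; auto; split; [lra|]. intros z Hz; left; lra.
    + exists y, (y+1)%R; split; [lra|split;[lra|]]. intros z Hz; right; lra.
  - intros y Ky. destruct (Rlt_or_le y x) as [Hl|Hl].
    + exists (fun y : R => y < x \/ x + / (INR 0 + 1) <= y)%R; split; [exists 0%nat; auto|left; auto].
    + assert (Hne : y <> x) by (intro E; subst; contradiction).
      assert (Hp : (0 < y - x)%R) by lra.
      destruct (archimed_cor1 (y - x) Hp) as [N [HN HN0]].
      exists (fun y0 : R => y0 < x \/ x + / (INR N + 1) <= y0)%R.
      split; [exists N; auto|right].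
      assert (/ (INR N + 1) <= / INR N)%R.
      { apply Rinv_le_contravar; [apply lt_0_INR; lia|lra]. }
      lra.
  - exists (fun y : R => y < x \/ x + / (INR 0 + 1) <= y)%R; exists 0%nat; auto.
  - intros U1 U2 [n1 ->] [n2 ->]. exists (fun y : R => y < x \/ x + / (INR (max n1 n2) + 1) <= y)%R.
    split; [exists (max n1 n2); auto|].
    assert (forall m, (m <= max n1 n2)%nat -> / (INR (max n1 n2) + 1) <= / (INR m + 1))%R.
    { intros m Hm. apply Rinv_le_contravar.
      - pose proof (pos_INR m); lra.
      - apply le_INR in Hm; lra. }
    pose proof (H n1 (Nat.le_max_l _ _)); pose proof (H n2 (Nat.le_max_r _ _)).
    split; intros y [Hy|Hy]; (left; lra) || (right; lra).
  - exists x, (x + / (INR n + 1))%R.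
    assert (0 < / (INR n + 1))%R by (apply Rinv_0_lt_compat; pose proof (pos_INR n); lra).
    split; [lra|split;[lra|]]. intros y Hy Ky. destruct (HS y Ky); lra.
Qed.

Lemma sat_union (X : tspace) (S : (X -> Prop) -> Prop) : topological X ->
  (forall K, S K -> saturated X K) -> saturated X (fun x => exists K, S K /\ K x).
Proof.
  intros T HS x Hx. apply NNPP; intro Hn.
  set (O := fun z => exists U, (is_open X U /\ ~ U x /\ exists K, S K /\ subset K U) /\ U z).
  assert (HO : is_open X O) by (apply open_union; auto; intros U [h _]; exact h).
  assert (Hc : subset (fun x => exists K, S K /\ K x) O).
  { intros y [K [SK Ky]].
    assert (~ K x) by (intro; apply Hn; eauto).
    destruct (classic (exists U, is_open X U /\ subset K U /\ ~ U x)) as [[U [HU [S1 S2]]]|Hno].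
    - exists U; split; [split; auto; split; auto; exists K; auto|apply S1; auto].
    - exfalso. apply H, (HS K SK). intros U HU S1. apply NNPP; intro. apply Hno; eauto. }
  destruct (Hx O HO Hc) as [U [[_ [Hux _]] Ux]]. contradiction.
Qed.

Lemma mkUnion (X : tspace) (A B : Qpt X) : topological X ->
  exists C : Qpt X, forall x, Qset X C x <-> Qset X A x \/ Qset X B x.
Proof.
  intros T.
  assert (Hne : exists x, Qset X A x \/ Qset X B x).
  { destruct (Qne X A) as [x Hx]; eauto. }
  assert (Hcs : compact_saturated X (fun x => Qset X A x \/ Qset X B x)).
  { split.
    - intros F HF Hc.
      destruct (proj1 (Qcs X A) F HF) as [n1 [G1 [HG1 HA1]]]; [intros x h; apply Hc; auto|].
      destruct (proj1 (Qcs X B) F HF) as [n2 [G2 [HG2 HB2]]]; [intros x h; apply Hc; auto|].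
      destruct (concat_fam n1 n2 G1 G2) as [G [H1 [H2 H3]]].
      exists (n1 + n2)%nat, G; split.
      + intros j Hj. destruct (H1 j Hj) as [[i [Hi ->]]|[i [Hi ->]]]; auto.
      + intros x [Ax|Bx].
        * destruct (HA1 x Ax) as [i [Hi Gx]]. destruct (H2 i Hi) as [j [Hj E]].
          exists j; rewrite E; auto.
        * destruct (HB2 x Bx) as [i [Hi Gx]]. destruct (H3 i Hi) as [j [Hj E]].
          exists j; rewrite E; auto.
    - assert (HS := sat_union X (fun K => K = Qset X A \/ K = Qset X B) T).
      assert (HS' : forall K, K = Qset X A \/ K = Qset X B -> saturated X K)
        by (intros K [-> | ->]; apply Qcs).
      specialize (HS HS').
      intros x Hx. destruct (HS x) as [K [[-> | ->] Kx]]; auto.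
      intros U HU S; apply Hx; auto. intros y [Ay|By]; apply S; eauto. }
  exists (MkQ X _ Hne Hcs); simpl; tauto.
Qed.

Lemma mkInter (X : tspace) (A B : Qpt X) : coherent X ->
  (exists x, Qset X A x /\ Qset X B x) ->
  exists C : Qpt X, forall x, Qset X C x <-> Qset X A x /\ Qset X B x.
Proof.
  intros Hcoh Hne.
  assert (Hcs : compact_saturated X (fun x => Qset X A x /\ Qset X B x)).
  { split.
    - apply Hcoh; apply Qcs.
    - intros x Hx; split; [apply (proj2 (Qcs X A))|apply (proj2 (Qcs X B))];
        intros U HU S; apply Hx; auto; intros y [h1 h2]; auto. }
  exists (MkQ X _ Hne Hcs); simpl; tauto.
Qed.

Lemma dir_inter (X : tspace) (D : Qpt X -> Prop) : topological X -> well_filtered X ->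
  directed (@Qle X) D ->
  exists M : Qpt X, (forall x, Qset X M x <-> forall d, D d -> Qset X d x) /\ is_sup (@Qle X) D M.
Proof.
  intros T WF [[d0 Hd0] Hdir].
  set (F := fun K => exists d, D d /\ K = Qset X d).
  assert (HFc : forall K, F K -> compact_saturated X K) by (intros K [d [_ ->]]; apply Qcs).
  assert (HFf : filtered_family X F).
  { split; [exists (Qset X d0); exists d0; auto|].
    intros K1 K2 [d1 [H1 ->]] [d2 [H2 ->]].
    destruct (Hdir d1 d2 H1 H2) as [d3 [H3 [L1 L2]]].
    exists (Qset X d3); split; [exists d3; auto|split; auto]. }
  assert (Hint : forall U, is_open X U -> subset (fun x => forall d, D d -> Qset X d x) U ->
                 exists d, D d /\ subset (Qset X d) U).
  { intros U HU S. destruct (WF F U HFc HFf HU) as [K [[d [Hd ->]] SK]]; eauto.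
    intros x Hx; apply S; intros d Hd; apply Hx; exists d; auto. }
  assert (Hne : exists x, forall d, D d -> Qset X d x).
  { apply NNPP; intro Hn.
    destruct (Hint _ (open_empty X T)) as [d [Hd S]].
    - intros x Hx; apply Hn; eauto.
    - destruct (Qne X d) as [x Hx]; exact (S x Hx). }
  assert (Hcs : compact_saturated X (fun x => forall d, D d -> Qset X d x)).
  { split.
    - intros G HG Hc.
      destruct (Hint _ (open_union X G T HG) Hc) as [d [Hd S]].
      destruct (proj1 (Qcs X d) G HG S) as [n [G0 [H1 H2]]].
      exists n, G0; split; auto. intros x Hx; apply H2, Hx, Hd.
    - intros x Hx d Hd. apply (proj2 (Qcs X d)). intros U HU S; apply Hx; auto.
      intros y Hy; apply S, Hy, Hd. }
  exists (MkQ X _ Hne Hcs); split; [simpl; tauto|].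
  split.
  - intros d Hd x Hx; simpl in Hx; auto.
  - intros u Hu x Hx; simpl. intros d Hd. apply (Hu d Hd x Hx).
Qed.

Lemma sup_char (X : tspace) (D : Qpt X -> Prop) (s : Qpt X) : topological X -> well_filtered X ->
  directed (@Qle X) D -> is_sup (@Qle X) D s ->
  forall x, Qset X s x <-> forall d, D d -> Qset X d x.
Proof.
  intros T WF Hd [Hub Hl]. destruct (dir_inter X D T WF Hd) as [M [HM [HMub _]]].
  intro x; split.
  - intros Hx d Dd. apply (Hub d Dd x Hx).
  - intros Hx. apply (Hl M HMub x). apply HM; auto.
Qed.

Lemma inf_char (X : tspace) (a b m : Qpt X) : topological X ->
  is_inf (@Qle X) (pair_set a b) m -> forall x, Qset X m x <-> Qset X a x \/ Qset X b x.
Proof.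
  intros T [Hlb Hg]. destruct (mkUnion X a b T) as [C HC].
  assert (Hm : Qle X C m).
  { apply Hg. intros d [->| ->] x Hx; apply HC; auto. }
  intro x; split.
  - intro Hx; apply HC, Hm, Hx.
  - intros [Hx|Hx]; [apply (Hlb a)|apply (Hlb b)]; unfold pair_set; auto.
Qed.

Lemma box_open (X : tspace) (U : X -> Prop) : topological X -> well_filtered X ->
  is_open X U -> scott_open (@Qle X) (fun A => subset (Qset X A) U).
Proof.
  intros T WF HU. split.
  - intros A B HA HAB x Hx; apply HA, HAB, Hx.
  - intros D s Hd Hs Hsub.
    destruct (dir_inter X D T WF Hd) as [M [HM _]].
    destruct Hd as [[d0 Hd0] Hdir].
    set (F := fun K => exists d, D d /\ K = Qset X d).
    destruct (WF F U) as [K [[d [Dd ->]] S]]; eauto.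
    + intros K [d [_ ->]]; apply Qcs.
    + split; [exists (Qset X d0); exists d0; auto|].
      intros K1 K2 [d1 [H1 ->]] [d2 [H2 ->]].
      destruct (Hdir d1 d2 H1 H2) as [d3 [H3 [L1 L2]]].
      exists (Qset X d3); split; [exists d3; auto|split; auto].
    + intros x Hx. apply Hsub. apply (sup_char X D s T WF); [split; eauto|auto|].
      intros d Dd; apply Hx; exists d; auto.
Qed.

Lemma scott_upper (X : tspace) (U : Qpt X -> Prop) (A B : Qpt X) :
  scott_open (@Qle X) U -> U A -> Qle X A B -> U B.
Proof. intros [H _]; apply H. Qed.

Lemma sat_upper (X : tspace) (K : Qpt X -> Prop) (A B : Qpt X) :
  saturated (QS X) K -> K A -> Qle X A B -> K B.
Proof.
  intros HK KA AB. apply HK. intros U HU S. apply (scott_upper X U A B); auto.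
Qed.

Lemma scott_top (X : tspace) : topological (QS X).
Proof.
  split; [|split].
  - split; [intros; exact I|]. intros D s [[d Hd] _] _ _; exists d; split; auto; exact I.
  - intros U V [U1 U2] [V1 V2]. split.
    + intros x y [Ux Vx] L; split; eauto.
    + intros D s Hd Hs [Us Vs].
      destruct (U2 D s Hd Hs Us) as [d1 [D1 U1']].
      destruct (V2 D s Hd Hs Vs) as [d2 [D2 V2']].
      destruct (proj2 Hd d1 d2 D1 D2) as [d3 [D3 [L1 L2]]].
      exists d3; split; auto; split; eauto.
  - intros F HF. split.
    + intros x y [U [FU Ux]] L. exists U; split; auto. apply (proj1 (HF U FU) x y); auto.
    + intros D s Hd Hs [U [FU Us]]. destruct (proj2 (HF U FU) D s Hd Hs Us) as [d [Dd Ud]].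
      exists d; split; auto; exists U; auto.
Qed.

Lemma union_compact (X : tspace) (S : Qpt X -> Prop) : topological X -> well_filtered X ->
  compact (QS X) S -> compact X (fun x => exists D, S D /\ Qset X D x).
Proof.
  intros T WF HS F HF Hc.
  set (V := fun W : Qpt X -> Prop => exists n G, (forall i, (i < n)%nat -> F (G i)) /\
             W = (fun A => subset (Qset X A) (fun x => exists i, (i < n)%nat /\ G i x))).
  destruct (compact_updir (QS X) S V HS) as [W [[n [G [HG ->]]] SW]].
  - intros W [n [G [HG ->]]]. apply box_open; auto. apply open_finunion; auto.
  - intros D SD. destruct (proj1 (Qcs X D) F HF) as [n [G [HG HDG]]].
    + intros x Hx; apply Hc; eauto.
    + exists (fun A => subset (Qset X A) (fun x => exists i, (i < n)%nat /\ G i x)).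
      split; [exists n, G; auto|exact HDG].
  - exists (fun A => subset (Qset X A) (fun x => exists i, (i < 0)%nat /\ (fun _ _ => False) i x)).
    exists 0%nat, (fun _ _ => False); split; auto; intros; lia.
  - intros W1 W2 [n1 [G1 [HG1 ->]]] [n2 [G2 [HG2 ->]]].
    destruct (concat_fam n1 n2 G1 G2) as [G [H1 [H2 H3]]].
    exists (fun A => subset (Qset X A) (fun x => exists i, (i < n1 + n2)%nat /\ G i x)).
    split; [exists (n1 + n2)%nat, G; split; auto|split].
    + intros j Hj. destruct (H1 j Hj) as [[i [Hi ->]]|[i [Hi ->]]]; auto.
    + intros A HA x Hx. destruct (HA x Hx) as [i [Hi Gx]]. destruct (H2 i Hi) as [j [Hj E]].
      exists j; rewrite E; auto.
    + intros A HA x Hx. destruct (HA x Hx) as [i [Hi Gx]]. destruct (H3 i Hi) as [j [Hj E]].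
      exists j; rewrite E; auto.
  - exists n, G; split; auto. intros x [D [SD Dx]]. apply (SW D SD x Dx).
Qed.

Lemma union_is_inf (X : tspace) (a b C : Qpt X) :
  (forall x, Qset X C x <-> Qset X a x \/ Qset X b x) -> is_inf (@Qle X) (pair_set a b) C.
Proof.
  intros HC. split.
  - intros d [-> | ->] z Hz; apply HC; auto.
  - intros v Hv z Hz. apply HC in Hz. destruct Hz as [Hz|Hz];
      [apply (Hv a)|apply (Hv b)]; unfold pair_set; auto.
Qed.

Lemma Q_dcpo (X : tspace) : topological X -> well_filtered X -> is_dcpo (@Qle X).
Proof. intros T WF D Hd. destruct (dir_inter X D T WF Hd) as [M [_ H]]; eauto. Qed.

Lemma Q_inf (X : tspace) : topological X -> inf_semilattice (@Qle X).
Proof. intros T a b. destruct (mkUnion X a b T) as [C HC]. exists C. apply union_is_inf; auto. Qed.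

Lemma Q_mc (X : tspace) : topological X -> well_filtered X -> meet_continuous (@Qle X).
Proof.
  intros T WF x D s m Hd Hs Hm.
  pose proof (sup_char X D s T WF Hd Hs) as Hsc.
  pose proof (inf_char X x s m T Hm) as Hmc.
  split.
  - intros y [d [Dd Hy]]. pose proof (inf_char X x d y T Hy) as Hyc.
    intros z Hz. apply Hyc. apply Hmc in Hz. destruct Hz as [Hz|Hz]; auto.
    right. apply (proj1 (Hsc z) Hz d Dd).
  - intros u Hu z Hz. apply Hmc. destruct (classic (Qset X x z)) as [Hx|Hx]; auto.
    right. apply Hsc. intros d Dd.
    destruct (mkUnion X x d T) as [y Hy].
    assert (Hyinf := union_is_inf X x d y Hy).
    assert (Hz' := Hu y (ex_intro _ d (conj Dd Hyinf)) z Hz).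
    apply Hy in Hz'. tauto.
Qed.

Definition Wf (X : tspace) (A : Qpt X) (V : Qpt X -> Prop) (B : Qpt X) : Prop :=
  forall C : Qpt X, (forall x, Qset X C x <-> Qset X A x /\ Qset X B x) -> V C.

Lemma Wf_sym (X : tspace) A V B : Wf X A V B -> Wf X B V A.
Proof. intros H C HC; apply H; intro x; rewrite HC; tauto. Qed.

Lemma Wf_anti (X : tspace) (A B A' B' : Qpt X) V : coherent X -> scott_open (@Qle X) V ->
  (forall x, Qset X A' x /\ Qset X B' x -> Qset X A x /\ Qset X B x) -> Wf X A V B -> Wf X A' V B'.
Proof.
  intros coh HV Hs H C' HC'.
  destruct (Qne X C') as [y Hy]. apply HC' in Hy. apply Hs in Hy.
  destruct (mkInter X A B coh (ex_intro _ y Hy)) as [C HC].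
  apply (scott_upper X V C C' HV (H C HC)). intros z Hz. apply HC, Hs, HC', Hz.
Qed.

Lemma KEY (X : tspace) (D : Qpt X -> Prop) (s B : Qpt X) (V : Qpt X -> Prop) :
  topological X -> well_filtered X -> coherent X ->
  directed (@Qle X) D -> is_sup (@Qle X) D s -> scott_open (@Qle X) V ->
  Wf X s V B -> exists d, D d /\ Wf X d V B.
Proof.
  intros T WF coh Hd Hs HV H.
  destruct (classic (exists d, D d /\ ~ exists x, Qset X d x /\ Qset X B x)) as [[d [Dd Hn]]|Hall].
  { exists d; split; auto. intros C HC. exfalso. destruct (Qne X C) as [x Hx]. apply Hn; exists x; apply HC; auto. }
  assert (Hall' : forall d, D d -> exists x, Qset X d x /\ Qset X B x).
  { intros d Dd; apply NNPP; intro; apply Hall; eauto. }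
  pose proof (sup_char X D s T WF Hd Hs) as Hsc.
  set (E := fun C => exists d, D d /\ forall x, Qset X C x <-> Qset X d x /\ Qset X B x).
  assert (HE : directed (@Qle X) E).
  { destruct Hd as [[d0 Hd0] Hdir]. split.
    - destruct (mkInter X d0 B coh (Hall' d0 Hd0)) as [C HC]. exists C, d0; auto.
    - intros C1 C2 [d1 [D1 H1]] [d2 [D2 H2]].
      destruct (Hdir d1 d2 D1 D2) as [d3 [D3 [L1 L2]]].
      destruct (mkInter X d3 B coh (Hall' d3 D3)) as [C3 HC3].
      exists C3; split; [exists d3; auto|split].
      + intros z Hz. apply H1. apply HC3 in Hz. split; [apply L1|]; tauto.
      + intros z Hz. apply H2. apply HC3 in Hz. split; [apply L2|]; tauto. }
  destruct (dir_inter X E T WF HE) as [M [HM HMs]].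
  assert (VM : V M).
  { apply H. intro x. rewrite HM. split.
    - intros Hx. destruct Hd as [[d0 Hd0] _]. split.
      + apply Hsc. intros d Dd. destruct (mkInter X d B coh (Hall' d Dd)) as [C HC].
        apply (proj1 (HC x) (Hx C (ex_intro _ d (conj Dd HC)))).
      + destruct (mkInter X d0 B coh (Hall' d0 Hd0)) as [C HC].
        apply (proj1 (HC x) (Hx C (ex_intro _ d0 (conj Hd0 HC)))).
    - intros [Sx Bx] C [d [Dd HC]]. apply HC. split; auto. apply (proj1 (Hsc x) Sx d Dd). }
  destruct (proj2 HV E M HE HMs VM) as [C [[d [Dd HC]] VC]].
  exists d; split; auto. intros C' HC'. apply (scott_upper X V C C' HV VC).
  intros z Hz; apply HC, HC', Hz.
Qed.

Lemma Wf_open (X : tspace) (A : Qpt X) V : topological X -> well_filtered X -> coherent X ->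
  scott_open (@Qle X) V -> scott_open (@Qle X) (Wf X A V).
Proof.
  intros T WF coh HV. split.
  - intros B B' H L. apply (Wf_anti X A B A B' V coh HV); auto.
    intros x [h1 h2]; split; auto.
  - intros D s Hd Hs H. apply Wf_sym in H.
    destruct (KEY X D s A V T WF coh Hd Hs HV H) as [d [Dd Hd']].
    exists d; split; auto; apply Wf_sym; auto.
Qed.

Definition Oset (X : tspace) (K2 : Qpt X -> Prop) V (A : Qpt X) : Prop :=
  forall B, K2 B -> Wf X A V B.

Lemma O_open (X : tspace) K2 V : topological X -> well_filtered X -> coherent X ->
  compact (QS X) K2 -> scott_open (@Qle X) V -> scott_open (@Qle X) (Oset X K2 V).
Proof.
  intros T WF coh HK HV. split.
  - intros A A' H L B KB. apply (Wf_anti X A B A' B V coh HV); auto.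
    intros x [h1 h2]; split; auto.
  - intros D s Hd Hs H.
    destruct (compact_updir (QS X) K2 (fun W => exists d, D d /\ W = Wf X d V) HK)
      as [W [[d [Dd ->]] SW]].
    + intros W [d [_ ->]]. apply Wf_open; auto.
    + intros B KB. destruct (KEY X D s B V T WF coh Hd Hs HV (H B KB)) as [d [Dd Hd']].
      exists (Wf X d V); split; eauto.
    + destruct Hd as [[d0 Hd0] _]. exists (Wf X d0 V); eauto.
    + intros W1 W2 [d1 [D1 ->]] [d2 [D2 ->]].
      destruct (proj2 Hd d1 d2 D1 D2) as [d3 [D3 [L1 L2]]].
      exists (Wf X d3 V); split; [eauto|split].
      * intros B HB. apply (Wf_anti X d1 B d3 B V coh HV); auto. intros x [h1 h2]; split; auto.
      * intros B HB. apply (Wf_anti X d2 B d3 B V coh HV); auto. intros x [h1 h2]; split; auto.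
    + exists d; split; auto.
Qed.

Definition FU {T : Type} (F : (T -> Prop) -> Prop) (V : T -> Prop) : Prop :=
  exists n G, (forall i, (i < n)%nat -> F (G i)) /\ V = (fun a => exists i, (i < n)%nat /\ G i a).

Lemma FU_updir {T : Type} (F : (T -> Prop) -> Prop) V1 V2 : FU F V1 -> FU F V2 ->
  exists V3, FU F V3 /\ subset V1 V3 /\ subset V2 V3.
Proof.
  intros [n1 [G1 [HG1 ->]]] [n2 [G2 [HG2 ->]]].
  destruct (concat_fam n1 n2 G1 G2) as [G [H1 [H2 H3]]].
  exists (fun a => exists i, (i < n1 + n2)%nat /\ G i a). split; [exists (n1 + n2)%nat, G; split; auto|split].
  - intros j Hj. destruct (H1 j Hj) as [[i [Hi ->]]|[i [Hi ->]]]; auto.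
  - intros x [i [Hi Gx]]. destruct (H2 i Hi) as [j [Hj E]]. exists j; rewrite E; auto.
  - intros x [i [Hi Gx]]. destruct (H3 i Hi) as [j [Hj E]]. exists j; rewrite E; auto.
Qed.

Lemma FU_empty {T : Type} (F : (T -> Prop) -> Prop) : exists V, FU F V /\ forall a, ~ V a.
Proof.
  exists (fun a => exists i, (i < 0)%nat /\ (fun _ _ => False) i a). split.
  - exists 0%nat, (fun _ _ => False); split; auto; intros; lia.
  - intros a [i [Hi _]]; lia.
Qed.

Lemma FU_single {T : Type} (F : (T -> Prop) -> Prop) U : F U -> exists V, FU F V /\ subset U V.
Proof.
  intros HU. exists (fun a => exists i, (i < 1)%nat /\ (fun _ => U) i a). split.
  - exists 1%nat, (fun _ => U); split; auto.
  - intros a Ua; exists 0%nat; split; auto.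
Qed.

Lemma QS_coherent (X : tspace) : topological X -> well_filtered X -> coherent X -> coherent (QS X).
Proof.
  intros T WF coh K1 K2 [HK1 SK1] [HK2 SK2] F HF Hc.
  assert (HFUo : forall V, FU F V -> scott_open (@Qle X) V).
  { intros V [n [G [HG ->]]]. apply (open_finunion (QS X) n G (scott_top X)). intros i Hi; apply HF, HG, Hi. }
  assert (Hmon : forall (V V' : Qpt X -> Prop) A B, subset V V' -> Wf X A V B -> Wf X A V' B).
  { intros V V' A B S H C HC; apply S, H, HC. }
  assert (Step1 : forall A, K1 A -> exists V, FU F V /\ Oset X K2 V A).
  { intros A KA.
    destruct (compact_updir (QS X) K2 (fun W => exists V, FU F V /\ W = Wf X A V) HK2)
      as [W [[V [HV ->]] SW]].
    - intros W [V [HV ->]]. apply Wf_open; auto.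
    - intros B KB. destruct (classic (exists x, Qset X A x /\ Qset X B x)) as [Hp|Hn].
      + destruct (mkInter X A B coh Hp) as [C HC].
        assert (KC : K1 C /\ K2 C).
        { split; [apply (sat_upper X K1 A C SK1 KA)|apply (sat_upper X K2 B C SK2 KB)];
          intros z Hz; apply HC in Hz; tauto. }
        destruct (Hc C KC) as [U [FU' UC]].
        destruct (FU_single F U FU') as [V [HV SV]].
        exists (Wf X A V); split; [eauto|].
        intros C' HC'. apply SV. apply (scott_upper X U C C' (HF U FU') UC).
        intros z Hz; apply HC, HC', Hz.
      + destruct (FU_empty F) as [V [HV _]]. exists (Wf X A V); split; [eauto|].
        intros C HC. exfalso. destruct (Qne X C) as [x Hx]. apply Hn; exists x; apply HC, Hx.
    - destruct (FU_empty F) as [V [HV _]]. eauto.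
    - intros W1 W2 [V1 [H1 ->]] [V2 [H2 ->]]. destruct (FU_updir F V1 V2 H1 H2) as [V3 [H3 [S1 S2]]].
      exists (Wf X A V3); split; [eauto|split; intros B; apply Hmon; auto].
    - exists V; split; auto. }
  destruct (compact_updir (QS X) K1 (fun W => exists V, FU F V /\ W = Oset X K2 V) HK1)
    as [W [[V [HV ->]] SW]].
  - intros W [V [HV ->]]. apply O_open; auto.
  - intros A KA. destruct (Step1 A KA) as [V [HV HO]]. exists (Oset X K2 V); split; eauto.
  - destruct (FU_empty F) as [V [HV _]]. eauto.
  - intros W1 W2 [V1 [H1 ->]] [V2 [H2 ->]]. destruct (FU_updir F V1 V2 H1 H2) as [V3 [H3 [S1 S2]]].
    exists (Oset X K2 V3); split; [eauto|split].
    + intros A HA B KB; apply (Hmon V1 V3); auto.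
    + intros A HA B KB; apply (Hmon V2 V3); auto.
  - destruct HV as [n [G [HG ->]]]. exists n, G; split; auto.
    intros A [KA KA2]. apply (SW A KA A KA2 A). intro; tauto.
Qed.

Lemma sat_ext (X : tspace) (A B : X -> Prop) : (forall x, A x <-> B x) -> saturated X A -> saturated X B.
Proof.
  intros H HA x Hx. apply H, HA. intros U HU S; apply Hx; auto. intros y Hy; apply S, H, Hy.
Qed.

Lemma QS_wf (X : tspace) : topological X -> well_filtered X -> well_filtered (QS X).
Proof.
  intros T WF FF U0 HF [[K0 HK0] Hfil] HU Hsub.
  apply NNPP; intro Hno.
  set (P := fun W : Qpt X -> Prop => scott_open (@Qle X) (fun A => U0 A \/ W A) /\
              forall K, FF K -> ~ subset K (fun A => U0 A \/ W A)).
  destruct (zorn_max (Qpt X) P) as [W [[HWo HWn] Wmax]].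
  { intros Fc HFc Htot. split.
    - split.
      + intros A A' [Ha|[W [FW Wa]]] L.
        * left; apply (scott_upper X U0 A A' HU Ha L).
        * destruct (proj1 (proj1 (HFc W FW)) A A' (or_intror Wa) L) as [h|h]; [left; auto|right; eauto].
      + intros D s Hd Hs [Ha|[W [FW Wa]]].
        * destruct (proj2 HU D s Hd Hs Ha) as [d [Dd Ud]]; exists d; split; auto.
        * destruct (proj2 (proj1 (HFc W FW)) D s Hd Hs (or_intror Wa)) as [d [Dd [h|h]]];
            exists d; split; eauto.
    - intros K FK SK.
      destruct (compact_updir (QS X) K
        (fun O => exists W, (W = (fun _ => False) \/ Fc W) /\ O = (fun A => U0 A \/ W A))
        (proj1 (HF K FK))) as [O [[W [[-> | FW] ->]] SO]].
      + intros O [W [[-> | FW] ->]].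
        * apply (open_ext (QS X) U0); auto. intro; tauto.
        * apply (HFc W FW).
      + intros A KA. destruct (SK A KA) as [h|[W [FW Wa]]].
        * exists (fun A => U0 A \/ (fun _ : Qpt X => False) A); split; [exists (fun _ => False); auto|left; auto].
        * exists (fun A => U0 A \/ W A); split; [exists W; auto|right; auto].
      + exists (fun A => U0 A \/ (fun _ : Qpt X => False) A); exists (fun _ => False); auto.
      + intros O1 O2 [W1 [[-> | F1] ->]] [W2 [[-> | F2] ->]].
        * eexists; split; [exists (fun _ => False); split; [left; reflexivity|reflexivity]|split; intros a h; exact h].
        * eexists; split; [exists W2; split; [right; auto|reflexivity]|split; intros a [h|h]; tauto].
        * eexists; split; [exists W1; split; [right; auto|reflexivity]|split; intros a [h|h]; tauto].
        * destruct (Htot W1 W2 F1 F2) as [Sx|Sx].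
          -- eexists; split; [exists W2; split; [right; auto|reflexivity]|split; intros a [h|h]; auto].
          -- eexists; split; [exists W1; split; [right; auto|reflexivity]|split; intros a [h|h]; auto].
      + apply Hno; exists K; split; auto. intros A KA; destruct (SO A KA); tauto.
      + apply (proj2 (HFc W FW) K FK). exact SO. }
  set (Cc := fun A => ~ (U0 A \/ W A)).
  assert (star : forall A, Cc A -> forall U, is_open X U -> subset (Qset X A) U ->
            exists K, FF K /\ forall D, K D -> Cc D -> subset (Qset X D) U).
  { intros A CA U HUo SA.
    set (W' := fun B => W B \/ subset (Qset X B) U).
    assert (HnP : ~ P W').
    { apply Wmax; [intros a h; left; exact h|]. intro S. apply CA; right.
      exact (S A (or_intror SA)). }
    assert (HW'o : scott_open (@Qle X) (fun A => U0 A \/ W' A)).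
    { pose proof (box_open X U T WF HUo) as [B1 B2]. split.
      - intros a b [h|[h|h]] L.
        + left; apply (scott_upper X U0 a b HU h L).
        + destruct (proj1 HWo a b (or_intror h) L) as [h'|h']; [left|right; left]; auto.
        + right; right; apply (B1 a b h L).
      - intros D s Hd Hs [h|[h|h]].
        + destruct (proj2 HU D s Hd Hs h) as [d [Dd h']]; exists d; split; [auto|left; auto].
        + destruct (proj2 HWo D s Hd Hs (or_intror h)) as [d [Dd [h'|h']]].
          * exists d; split; [auto|left; auto].
          * exists d; split; [auto|right; left; auto].
        + destruct (B2 D s Hd Hs h) as [d [Dd h']]; exists d; split; [auto|right; right; auto]. }
    assert (Hex : exists K, FF K /\ subset K (fun A => U0 A \/ W' A)).
    { apply NNPP; intro Hn. apply HnP. split; auto. intros K FK SK; apply Hn; eauto. }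
    destruct Hex as [K [FK SK]]. exists K; split; auto.
    intros D KD CD. destruct (SK D KD) as [h|[h|h]]; auto; exfalso; apply CD; auto. }
  assert (Hmeet : forall K, FF K -> exists D, K D /\ Cc D).
  { intros K FK. apply NNPP; intro Hn. apply (HWn K FK). intros A KA.
    apply NNPP; intro h; apply Hn; exists A; split; auto. }
  assert (mkE : forall K, FF K -> exists E : Qpt X,
             forall x, Qset X E x <-> exists D, (K D /\ Cc D) /\ Qset X D x).
  { intros K FK.
    assert (Hne : exists x, exists D, (K D /\ Cc D) /\ Qset X D x).
    { destruct (Hmeet K FK) as [D [KD CD]]. destruct (Qne X D) as [x Hx]. eauto. }
    assert (Hcs : compact_saturated X (fun x => exists D, (K D /\ Cc D) /\ Qset X D x)).
    { split.
      - apply (compact_ext X (fun x => exists D, (fun D => K D /\ Cc D) D /\ Qset X D x)); [intro; tauto|].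
        apply union_compact; auto.
        apply (compact_ext (QS X) (fun A => K A /\ ~ (U0 A \/ W A))); [intro; unfold Cc; tauto|].
        apply compact_inter_closed; [apply (HF K FK)|exact HWo].
      - apply (sat_ext X (fun x => exists S, (exists D, (K D /\ Cc D) /\ S = Qset X D) /\ S x)).
        + intro x; split.
          * intros [S [[D [HD ->]] Sx]]; eauto.
          * intros [D [HD Dx]]; exists (Qset X D); split; eauto.
        + apply sat_union; auto. intros S [D [_ ->]]; apply Qcs. }
    exists (MkQ X _ Hne Hcs); simpl; tauto. }
  set (EE := fun E => exists K, FF K /\ forall x, Qset X E x <-> exists D, (K D /\ Cc D) /\ Qset X D x).
  assert (HEd : directed (@Qle X) EE).
  { split.
    - destruct (mkE K0 HK0) as [E HE]; exists E, K0; auto.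
    - intros E1 E2 [K1 [F1 H1]] [K2 [F2 H2]].
      destruct (Hfil K1 K2 F1 F2) as [K3 [F3 [S1 S2]]].
      destruct (mkE K3 F3) as [E3 H3]. exists E3; split; [exists K3; auto|split].
      + intros x Hx. apply H3 in Hx. destruct Hx as [D [[KD CD] Dx]]. apply H1; exists D; split; auto.
      + intros x Hx. apply H3 in Hx. destruct Hx as [D [[KD CD] Dx]]. apply H2; exists D; split; auto. }
  destruct (dir_inter X EE T WF HEd) as [M [HM HMs]].
  assert (MC : Cc M).
  { intro h. destruct (proj2 HWo EE M HEd HMs h) as [E [[K [FK HE]] hE]].
    destruct (Hmeet K FK) as [D [KD CD]]. apply CD.
    apply (scott_upper X _ E D HWo hE). intros x Dx. apply HE; eauto. }
  assert (Msub : forall A, Cc A -> subset (Qset X M) (Qset X A)).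
  { intros A CA x Mx. apply (proj2 (Qcs X A)). intros U HUo SA.
    destruct (star A CA U HUo SA) as [K [FK HK]].
    destruct (mkE K FK) as [E HE].
    assert (Ex : Qset X E x) by (apply (proj1 (HM x) Mx E); exists K; auto).
    apply HE in Ex. destruct Ex as [D [[KD CD] Dx]]. apply (HK D KD CD x Dx). }
  apply MC. left. apply Hsub. intros K FK.
  destruct (Hmeet K FK) as [D [KD CD]].
  apply (sat_upper X K D M (proj2 (HF K FK)) KD). apply Msub; auto.
Qed.

Lemma part1 (X : tspace) : topological X -> well_filtered X -> coherent X -> Q_good X.
Proof.
  intros T WF coh. split; [apply Q_dcpo; auto|split; [apply Q_inf; auto|split; [apply Q_mc; auto|split]]].
  - apply QS_wf; auto.
  - apply QS_coherent; auto.
Qed.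

Theorem proposition4p24 :
  (forall X : tspace, topological X -> well_filtered X -> coherent X -> Q_good X) /\
  (forall n : nat, Q_good (QnR n)).
Proof.
  split; [exact part1|].
  assert (H : forall n, topological (QnR n) /\ well_filtered (QnR n) /\ coherent (QnR n)).
  { induction n as [|n [T [WF coh]]].
    - split; [apply sorg_top|split; [apply closedK_wf|apply closedK_coh]; apply sorg_closedK].
    - simpl. split; [apply scott_top|split; [apply QS_wf|apply QS_coherent]; auto]. }
  intro n. destruct (H n) as [T [WF coh]]. apply part1; auto.
Qed.
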